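(* Let $p$ be a prime number and let $x,y,z\in\mathbb{N}$ with $x\le y\le z$ satisfy $\frac{4}{p}=\frac{1}{x}+\frac{1}{y}+\frac{1}{z}$. Let $d=\gcd(x,y,z)$, $a=\gcd(x,y)/d$, $b=\gcd(x,z)/d$, $c=\gcd(y,z)/d$, and let $x^{\circ},y^{\circ},z^{\circ}$ be the positive integers with $x=x^{\circ}abd$, $y=y^{\circ}acd$, $z=z^{\circ}bcd$. (i) If the solution is of Type I, i.e. $\gcd(x,p)=1$, $\gcd(y,p)=1$ and $\gcd(z,p)=p$, then $x^{\circ}=y^{\circ}=1$ and $z^{\circ}=p$. (ii) If the solution is of Type II, i.e. $\gcd(x,p)=1$, $\gcd(y,p)=p$ and $\gcd(z,p)=p$, then $x^{\circ}=y^{\circ}=z^{\circ}=1$.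
   Context: $\mathbb{N}$ denotes the positive integers. The quantities $x^{\circ},y^{\circ},z^{\circ}$ are well-defined positive integers since $abd\mid x$, $acd\mid y$, $bcd\mid z$ ($a,b,c$ are pairwise coprime). *)

(* Defs.v *)
From mathcomp Require Import all_boot.
Set Implicit Arguments. Unset Strict Implicit. Unset Printing Implicit Defensive.

(* 4/p = 1/x + 1/y + 1/z, cleared of denominators (all quantities positive). *)
Definition ES_eq (p x y z : nat) : Prop :=
  4 * (x * y * z) = p * (y * z + x * z + x * y).

Definition gcd3 (x y z : nat) : nat := gcdn (gcdn x y) z.
Definition ga (x y z : nat) : nat := gcdn x y %/ gcd3 x y z.
Definition gb (x y z : nat) : nat := gcdn x z %/ gcd3 x y z.
Definition gc (x y z : nat) : nat := gcdn y z %/ gcd3 x y z.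
Definition xo (x y z : nat) : nat := x %/ (ga x y z * gb x y z * gcd3 x y z).
Definition yo (x y z : nat) : nat := y %/ (ga x y z * gc x y z * gcd3 x y z).
Definition zo (x y z : nat) : nat := z %/ (gb x y z * gc x y z * gcd3 x y z).

(* Main.v *)
Require Import Defs.
From mathcomp Require Import all_boot all_algebra ring.

Lemma cop_of (a b x y z : nat) : gcdn (gcdn x y) z = 1 ->
  (a %| x) || (b %| x) -> (a %| y) || (b %| y) -> (a %| z) || (b %| z) -> coprime a b.
Proof.
move=> g1 hx hy hz; rewrite /coprime -dvdn1 -g1.
have h1 : gcdn a b %| a := dvdn_gcdl a b.
have h2 : gcdn a b %| b := dvdn_gcdr a b.
have H : forall t, (a %| t) || (b %| t) -> gcdn a b %| t.
  by move=> t /orP [] h; [apply: dvdn_trans h1 h | apply: dvdn_trans h2 h].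
by rewrite !dvdn_gcd !H.
Qed.

Lemma mAC1 m n k : m * n * k = n * (k * m).
Proof. by rewrite (mulnC m n) -mulnA (mulnC m k). Qed.
Lemma mAC2 m n k : m * n * k = n * (m * k).
Proof. by rewrite (mulnC m n) -mulnA. Qed.

Lemma decomp x y z : 0 < x -> 0 < y -> 0 < z -> exists a b c d u v w,
 [/\ x = u*a*b*d, y = v*a*c*d & z = w*b*c*d] /\ [/\ xo x y z = u, yo x y z = v & zo x y z = w] /\
 [/\ coprime (b*u) (c*v), coprime (a*u) (c*w) & coprime (a*v) (b*w)].
Proof.
move=> Hx Hy Hz.
rewrite /xo /yo /zo /ga /gb /gc.
have dpos : 0 < gcd3 x y z by rewrite /gcd3 gcdn_gt0 Hz orbT.
have dx : gcd3 x y z %| x by apply: dvdn_trans (dvdn_gcdl _ _) (dvdn_gcdl _ _).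
have dy : gcd3 x y z %| y by apply: dvdn_trans (dvdn_gcdl _ _) (dvdn_gcdr _ _).
have dz : gcd3 x y z %| z by apply: dvdn_gcdr.
move: dpos dx dy dz; move Ed: (gcd3 x y z) => d dpos.
case/dvdnP=> x1 Ex; case/dvdnP=> y1 Ey; case/dvdnP=> z1 Ez; subst x y z.
rewrite /gcd3 -!muln_gcdl in Ed *.
rewrite !mulnK //.
have g1 : gcdn (gcdn x1 y1) z1 = 1.
  by apply/eqP; rewrite -(eqn_pmul2r dpos) mul1n Ed.
have dxy := dvdn_gcdl x1 y1. have dyx := dvdn_gcdr x1 y1.
have dxz := dvdn_gcdl x1 z1. have dzx := dvdn_gcdr x1 z1.
have dyz := dvdn_gcdl y1 z1. have dzy := dvdn_gcdr y1 z1.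
have cab : coprime (gcdn x1 y1) (gcdn x1 z1) by apply: (@cop_of _ _ _ _ _ g1); rewrite ?dxy ?dyx ?dxz ?dzx ?dyz ?dzy ?orbT.
have cac : coprime (gcdn x1 y1) (gcdn y1 z1) by apply: (@cop_of _ _ _ _ _ g1); rewrite ?dxy ?dyx ?dxz ?dzx ?dyz ?dzy ?orbT.
have cbc : coprime (gcdn x1 z1) (gcdn y1 z1) by apply: (@cop_of _ _ _ _ _ g1); rewrite ?dxy ?dyx ?dxz ?dzx ?dyz ?dzy ?orbT.
move: dxy dyx dxz dzx dyz dzy cab cac cbc Ed.
move Ea: (gcdn x1 y1) => a; move Eb: (gcdn x1 z1) => b; move Ec: (gcdn y1 z1) => c.
move=> dxy dyx dxz dzx dyz dzy cab cac cbc Ed.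
have : a * b %| x1 by rewrite Gauss_dvd // dxy dxz.
have : a * c %| y1 by rewrite Gauss_dvd // dyx dyz.
have : b * c %| z1 by rewrite Gauss_dvd // dzx dzy.
case/dvdnP=> w Ez; case/dvdnP=> v Ey; case/dvdnP=> u Ex; subst x1 y1 z1.
have := Hx; rewrite !muln_gt0 => /andP [/andP [u0 /andP [a0 b0]] _].
have := Hy; rewrite !muln_gt0 => /andP [/andP [v0 /andP [_ c0]] _].
have := Hz; rewrite !muln_gt0 => /andP [/andP [w0 _] _].
have cop : forall k m n, 0 < k -> gcdn (m * k) (n * k) = k -> coprime m n.
  move=> k m n k0 E; rewrite /coprime; apply/eqP.
  by apply/eqP; rewrite -(eqn_pmul2r k0) mul1n muln_gcdl E.
exists a, b, c, d, u, v, w; split; [|split].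
- by split; rewrite !mulnA.
- by split; rewrite -mulnA mulnK // !muln_gt0 ?a0 ?b0 ?c0 ?dpos.
split.
- by apply: (cop a) => //; rewrite !mAC1 Ea.
- by apply: (cop b) => //; rewrite mAC2 mAC1 Eb.
- by apply: (cop c) => //; rewrite !mAC2 Ec.
Qed.

Lemma ndiv (p t x : nat) : prime p -> gcdn x p = 1 -> p %| t -> t %| x -> False.
Proof.
move=> pr g pt tx.
have : p %| gcdn x p by rewrite dvdn_gcd (dvdn_trans pt tx) dvdnn.
by rewrite g dvdn1 => /eqP p1; move: (prime_gt1 pr); rewrite p1.
Qed.

Lemma div1 (u x p : nat) : gcdn x p = 1 -> u %| x -> u %| p -> u = 1.
Proof.
move=> g ux up; apply/eqP; rewrite -dvdn1 -g dvdn_gcd ux up //.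
Qed.

Lemma primediv (p u : nat) : prime p -> u %| p -> u = 1 \/ u = p.
Proof. by case/primeP=> _ H /H /orP [] /eqP ->; [left|right]. Qed.

Arguments div1 {u x p}. Arguments ndiv {p t x}. Arguments primediv {p u}.

Theorem lemma5 (p x y z : nat) :
  prime p -> 0 < x -> x <= y -> y <= z -> ES_eq p x y z ->
  ((gcdn x p = 1 /\ gcdn y p = 1 /\ gcdn z p = p) ->
     xo x y z = 1 /\ yo x y z = 1 /\ zo x y z = p) /\
  ((gcdn x p = 1 /\ gcdn y p = p /\ gcdn z p = p) ->
     xo x y z = 1 /\ yo x y z = 1 /\ zo x y z = 1).
Proof.
move=> pr x0 xy yz E.
have y0 : 0 < y by apply: leq_trans x0 xy.
have z0 : 0 < z by apply: leq_trans y0 yz.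
have [a [b [c [d [u [v [w [[Ex Ey Ez] [[-> -> ->] [c1 c2 c3]]]]]]]]]] := @decomp x y z x0 y0 z0.
have := x0; rewrite {1}Ex !muln_gt0 => /andP [/andP [/andP [u0 a0] b0] d0].
have := y0; rewrite {1}Ey !muln_gt0 => /andP [/andP [/andP [v0 _] c0] _].
have := z0; rewrite {1}Ez !muln_gt0 => /andP [/andP [/andP [w0 _] _] _].
have E' : 4*d*a*b*c*u*v*w = p*(c*v*w + b*u*w + a*u*v).
  apply/eqP; rewrite -(@eqn_pmul2l (d*d*a*b*c)); last by rewrite !muln_gt0 d0 a0 b0 c0.
  apply/eqP; move: E; rewrite /ES_eq Ex Ey Ez => E.
  transitivity (4 * (u * a * b * d * (v * a * c * d) * (w * b * c * d))); first by ring.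
  by rewrite E; ring.
move: c1 c2 c3; rewrite !coprimeMl !coprimeMr.
move=> /andP [/andP [_ _] /andP [cuc cuv]] /andP [/andP [_ caw] /andP [_ cuw]] /andP [/andP [_ _] /andP [cvb cvw]].
have up : u %| p.
  have H : u %| p*(c*v*w) + u*(p*(b*w + a*v)).
    rewrite (_ : _ + _ = 4*d*a*b*c*u*v*w); [by apply/dvdnP; exists (4*d*a*b*c*v*w); ring | by rewrite E'; ring].
  rewrite dvdn_addl in H; last exact: dvdn_mulr _ (dvdnn u).
  by move: H; rewrite Gauss_dvdl // !coprimeMr cuc cuv cuw.
have vp : v %| p.
  have H : v %| p*(b*u*w) + v*(p*(c*w + a*u)).
    rewrite (_ : _ + _ = 4*d*a*b*c*u*v*w); [by apply/dvdnP; exists (4*d*a*b*c*u*w); ring | by rewrite E'; ring].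
  rewrite dvdn_addl in H; last exact: dvdn_mulr _ (dvdnn v).
  by move: H; rewrite Gauss_dvdl // !coprimeMr cvb cvw coprime_sym cuv.
have wp : w %| p.
  have H : w %| p*(a*u*v) + w*(p*(c*v + b*u)).
    rewrite (_ : _ + _ = 4*d*a*b*c*u*v*w); [by apply/dvdnP; exists (4*d*a*b*c*u*v); ring | by rewrite E'; ring].
  rewrite dvdn_addl in H; last exact: dvdn_mulr _ (dvdnn w).
  by move: H; rewrite Gauss_dvdl // !coprimeMr coprime_sym caw coprime_sym cuw coprime_sym cvw.
have ux : u %| x by rewrite Ex; apply/dvdnP; exists (a*b*d); ring.
have vy : v %| y by rewrite Ey; apply/dvdnP; exists (a*c*d); ring.
have ax : a %| x by rewrite Ex; apply/dvdnP; exists (u*b*d); ring.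
have bx : b %| x by rewrite Ex; apply/dvdnP; exists (u*a*d); ring.
have dx : d %| x by rewrite Ex; apply/dvdnP; exists (u*a*b); ring.
have ay : a %| y by rewrite Ey; apply/dvdnP; exists (v*c*d); ring.
have cy : c %| y by rewrite Ey; apply/dvdnP; exists (v*a*d); ring.
have dy : d %| y by rewrite Ey; apply/dvdnP; exists (v*a*c); ring.
split.
- move=> [gx [gy gz]].
  have u1 := div1 gx ux up; have v1 := div1 gy vy vp.
  do 2 (split => //).
  case: (primediv pr wp) => // w1.
  have : p %| z by rewrite -gz dvdn_gcdl.
  rewrite Ez w1 mul1n !Euclid_dvdM // => /orP [/orP [pb|pc]|pd].
  + by case: (ndiv pr gx pb bx).
  + by case: (ndiv pr gy pc cy).
  + by case: (ndiv pr gx pd dx).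
- move=> [gx [gy gz]].
  have u1 := div1 gx ux up.
  split => //.
  have pz : p %| z by rewrite -gz dvdn_gcdl.
  have py : p %| y by rewrite -gy dvdn_gcdl.
  have p1 := prime_gt1 pr.
  case: (primediv pr vp) => v1; case: (primediv pr wp) => w1; subst u v w => //.
  + (* v = 1, w = p *)
    exfalso.
    have pc : p %| c.
      move: py; rewrite Ey !mul1n !Euclid_dvdM // => /orP [/orP [pa|pc]|pd] //.
      + by case: (ndiv pr gx pa ax).
      + by case: (ndiv pr gx pd dx).
    have E2 : p * (4*d*a*b*c) = p * (a + p*(b+c)).
      rewrite (_ : p * (4*d*a*b*c) = 4*d*a*b*c*1*1*p); last ring. rewrite E'; ring.
    move/eqP: E2; rewrite eqn_pmul2l ?prime_gt0 // => /eqP E2.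
    have : p %| a + p*(b+c) by rewrite -E2; exact: dvdn_mull _ pc.
    rewrite dvdn_addl; last exact: dvdn_mulr _ (dvdnn p). move=> pa.
    by case: (ndiv pr gx pa ax).
  + (* v = p, w = 1 *)
    exfalso.
    have pc : p %| c.
      move: pz; rewrite Ez !mul1n !Euclid_dvdM // => /orP [/orP [pb|pc]|pd] //.
      + by case: (ndiv pr gx pb bx).
      + by case: (ndiv pr gx pd dx).
    have E2 : p * (4*d*a*b*c) = p * (b + p*(c+a)).
      rewrite (_ : p * (4*d*a*b*c) = 4*d*a*b*c*1*p*1); last ring. rewrite E'; ring.
    move/eqP: E2; rewrite eqn_pmul2l ?prime_gt0 // => /eqP E2.
    have : p %| b + p*(c+a) by rewrite -E2; exact: dvdn_mull _ pc.
    rewrite dvdn_addl; last exact: dvdn_mulr _ (dvdnn p). move=> pb.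
    by case: (ndiv pr gx pb bx).
  + (* v = p, w = p *)
    exfalso; move: cvw; rewrite /coprime gcdnn => /eqP pe.
    by move: p1; rewrite pe.
Qed.
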